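(* For $t\in[0,1]$ and $x\ge 0$ define \[ f_t(x)=(1-t)\int_0^{1}x^{t\alpha}\,d\alpha+t\,x^{t}\int_0^{1}x^{(1-t)\alpha}\,d\alpha \] (with the convention $0^0=1$). Then for all $x\ge 0$ and all $t\in[0,1]$, \[ x^t\le f_t(x)\le \tfrac12\left(x^t+1-t+tx\right). \]
   Context: For $t\in(0,1)$ and $x>0$, $x\neq1$, one has $f_t(x)=\frac{1}{\log x}\left(\frac{1-t}{t}(x^t-1)+\frac{t}{1-t}x^t(x^{1-t}-1)\right)$; $f_t$ is the representing function of the weighted logarithmic mean. *)

(* Defs.v *)
From Stdlib Require Import Reals.
From Coquelicot Require Import Coquelicot.
Open Scope R_scope.

Definition rpow (x y : R) : R :=
  if Req_EM_T x 0 then (if Req_EM_T y 0 then 1 else 0) else Rpower x y.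

Definition f_t (t x : R) : R :=
  (1 - t) * RInt (fun a => rpow x (t * a)) 0 1
  + t * rpow x t * RInt (fun a => rpow x ((1 - t) * a)) 0 1.

(* Main.v *)
Require Import Defs.
From Stdlib Require Import Reals Lra Psatz.
From Coquelicot Require Import Coquelicot.
Open Scope R_scope.

Lemma exp_tan y z : exp z * (1 + (y - z)) <= exp y.
Proof.
  replace (exp y) with (exp z * exp (y - z)).
  - apply Rmult_le_compat_l; [left; apply exp_pos | apply exp_ineq1_le].
  - rewrite <- exp_plus; f_equal; ring.
Qed.

Lemma exp_conv a u v : 0 <= a <= 1 ->
  exp ((1-a)*u + a*v) <= (1-a)*exp u + a*exp v.
Proof.
  intros Ha. set (m := (1-a)*u + a*v).
  pose proof (exp_tan u m). pose proof (exp_tan v m).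
  assert (exp m = (1-a)*(exp m * (1 + (u - m))) + a*(exp m * (1 + (v - m)))).
  { unfold m; ring. }
  rewrite H1. apply Rplus_le_compat; apply Rmult_le_compat_l; lra.
Qed.

Lemma RInt_aff A B : RInt (fun a => A + B*a) 0 1 = A + B/2.
Proof.
  apply is_RInt_unique.
  replace (A + B/2) with (minus ((fun a => A*a + B*(a*a)/2) 1) ((fun a => A*a + B*(a*a)/2) 0)).
  2:{ unfold minus, plus, opp; simpl. field. }
  apply (is_RInt_derive (fun a => A*a + B*(a*a)/2) (fun a => A + B*a)).
  - intros x _. auto_derive; auto. simpl; field.
  - intros x _. apply (ex_derive_continuous (fun a => A + B*a)). auto_derive; auto.
Qed.

Lemma exRInt_exp c : ex_RInt (fun a => exp (c*a)) 0 1.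
Proof.
  apply (ex_RInt_continuous (V:=R_CompleteNormedModule)). intros z _. apply (ex_derive_continuous (fun a => exp (c*a))). auto_derive; auto.
Qed.

Lemma exRInt_aff A B : ex_RInt (fun a => A + B*a) 0 1.
Proof.
  apply (ex_RInt_continuous (V:=R_CompleteNormedModule)). intros z _. apply (ex_derive_continuous (fun a => A + B*a)). auto_derive; auto.
Qed.

Lemma G_low c : exp (c/2) <= RInt (fun a => exp (c*a)) 0 1.
Proof.
  replace (exp (c/2)) with (exp (c/2) * (1 - c/2) + (exp (c/2) * c)/2) by field.
  rewrite <- RInt_aff. apply RInt_le; try lra.
  apply exRInt_aff. apply exRInt_exp.
  intros a _. pose proof (exp_tan (c*a) (c/2)). nra.
Qed.

Lemma G_up c : RInt (fun a => exp (c*a)) 0 1 <= (1 + exp c)/2.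
Proof.
  replace ((1 + exp c)/2) with (1 + (exp c - 1)/2) by field.
  rewrite <- RInt_aff. apply RInt_le; try lra.
  apply exRInt_exp. apply exRInt_aff.
  intros a Ha. pose proof (exp_conv a 0 c ltac:(lra)). rewrite exp_0 in H.
  replace ((1-a)*0 + a*c) with (c*a) in H by ring. lra.
Qed.
Lemma rpow_pos x y : 0 < x -> rpow x y = exp (y * ln x).
Proof. intros Hx. unfold rpow. destruct (Req_EM_T x 0). lra. reflexivity. Qed.

Lemma RInt_rpow x s : 0 < x ->
  RInt (fun a => rpow x (s * a)) 0 1 = RInt (fun a => exp ((s * ln x) * a)) 0 1.
Proof.
  intros Hx. apply RInt_ext. intros a _. rewrite rpow_pos by auto. f_equal; ring.
Qed.

Theorem lemma2p3 (x t : R) (hx : 0 <= x) (ht0 : 0 <= t) (ht1 : t <= 1) :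
  rpow x t <= f_t t x /\ f_t t x <= (rpow x t + 1 - t + t * x) / 2.
Proof.
  destruct hx as [hx | hx].
  - unfold f_t. rewrite !RInt_rpow by auto. rewrite rpow_pos by auto.
    set (L := ln x).
    assert (Ex : x = exp L) by (unfold L; rewrite exp_ln; auto).
    pose proof (G_low (t*L)) as A1. pose proof (G_up (t*L)) as A2.
    pose proof (G_low ((1-t)*L)) as B1. pose proof (G_up ((1-t)*L)) as B2.
    set (G1 := RInt (fun a => exp (t * L * a)) 0 1) in *.
    set (G2 := RInt (fun a => exp ((1 - t) * L * a)) 0 1) in *.
    assert (P : 0 < exp (t*L)) by apply exp_pos.
    split.
    + pose proof (exp_conv t (t*L/2) (t*L + (1-t)*L/2) ltac:(lra)) as C.
      assert (EE: (1-t)*(t*L/2) + t*(t*L + (1-t)*L/2) = t*L) by field. rewrite EE in C.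
      rewrite exp_plus in C.
      replace (t*L/2) with (t*L/2) in C by ring.
      assert (E1 : (1-t) * exp (t*L/2) <= (1-t)*G1) by (apply Rmult_le_compat_l; lra).
      assert (E2 : t * (exp (t*L) * exp ((1-t)*L/2)) <= t * exp (t*L) * G2).
      { rewrite Rmult_assoc. apply Rmult_le_compat_l; [lra|].
        apply Rmult_le_compat_l; lra. }
      lra.
    + assert (Exx : exp (t*L) * exp ((1-t)*L) = x).
      { rewrite <- exp_plus, Ex. f_equal; ring. }
      assert (E1 : (1-t)*G1 <= (1-t)*((1 + exp (t*L))/2)) by (apply Rmult_le_compat_l; lra).
      assert (E2 : t * exp (t*L) * G2 <= t * exp (t*L) * ((1 + exp ((1-t)*L))/2)).
      { apply Rmult_le_compat_l; [|lra]. apply Rmult_le_pos; lra. }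
      nra.
  - subst x. destruct ht0 as [ht0 | ht0].
    + assert (R0 : rpow 0 t = 0).
      { unfold rpow. destruct (Req_EM_T 0 0); [|lra]. destruct (Req_EM_T t 0); [lra|auto]. }
      assert (I0 : RInt (fun a => rpow 0 (t*a)) 0 1 = 0).
      { rewrite (RInt_ext _ (fun _ => 0)).
        - rewrite RInt_const. unfold scal; simpl; unfold mult; simpl. ring.
        - intros a Ha. rewrite Rmin_left, Rmax_right in Ha by lra.
          unfold rpow. destruct (Req_EM_T 0 0); [|lra].
          destruct (Req_EM_T (t*a) 0); auto. nra. }
      unfold f_t. rewrite R0, I0. lra.
    + subst t. assert (R0 : rpow 0 0 = 1).
      { unfold rpow. destruct (Req_EM_T 0 0); [|lra]. auto. }
      assert (I0 : RInt (fun a => rpow 0 (0*a)) 0 1 = 1).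
      { rewrite (RInt_ext _ (fun _ => 1)).
        - rewrite RInt_const. unfold scal; simpl; unfold mult; simpl. ring.
        - intros a Ha. rewrite Rmult_0_l. exact R0. }
      unfold f_t. rewrite R0, I0. lra.
Qed.
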